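(* In the mechanism $\mathbb{M}_{\text{add}}$, the expected sum of payments made by the buyers equals $\frac12\sum_{\ell\in L}\Pr_{\mathbf v}[\ell\notin\Lambda_{n+1}(\mathbf v)]\,p_\ell$.
   Context: Two-sided market: buyers $[n]$, sellers $[m]$, items $[k]$; seller $j$ owns $I_j$ ($I_j$ disjoint, covering $[k]$). Buyer valuations $v_i$ are monotone normalized XOS functions on $2^{[k]}$ drawn independently from public distributions $G_i$; seller $j$'s valuation $w_j$ is additive over subsets of $I_j$, drawn independently from $F_j$. For XOS $v$ and $T\subseteq[k]$, $a(v,T,\cdot)$ is a fixed additive function with $a(v,T,T)=v(T)$, $a(v,T,S)\le v(S)$. $\mathbb{A}$ maps each buyer profile $\mathbf v$ to an allocation $X^{\mathbb A}(\mathbf v)$ of disjoint bundles to buyers. $\mathrm{SW}^B_\ell(\mathbf v)=a(v_i,X^{\mathbb A}_i(\mathbf v),\{\ell\})$ if $\ell\in X^{\mathbb A}_i(\mathbf v)$, else $0$; $\mathrm{SW}^S_\ell(\mathbf w)=w_j(\{\ell\})$ for $\ell\in I_j$. $L_j=\{\ell\in I_j:\mathbb{E}[\mathrm{SW}^B_\ell]\ge4\mathbb{E}[\mathrm{SW}^S_\ell]\}$, $L=\bigcup_jL_j$, $p_\ell=\frac12\mathbb{E}[\mathrm{SW}^B_\ell(\mathbf v)]$ for $\ell\in L$. Mechanism $\mathbb{M}_{\text{add}}$: $\Lambda_1=L$; buyers $i=1,\dots,n$ in turn request a bundle $B_i\subseteq\Lambda_i$ maximizing their expected utility at prices $p_\ell$,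 and $\Lambda_{i+1}=\Lambda_i\setminus B_i$; $\Lambda_{n+1}(\mathbf v)$ is the set of items of $L$ requested by no buyer when buyers' valuations are $\mathbf v$. Let $B=\bigcup_iB_i$. For each seller $j$: $S_j=B\cap L_j$, $p(S_j)=\sum_{\ell\in S_j}p_\ell$, $q_j=1/(2\Pr[w_j(S_j)\le p(S_j)])$; with probability $q_j$ offer $j$ payment $p(S_j)$ for $S_j$; she accepts iff $w_j(S_j)\le p(S_j)$; on acceptance each item of $S_j\cap B_i$ goes to buyer $i$, who pays $p_\ell$ for it. Buyers pay nothing for items not transferred. *)

(* Defs.v *)
From HB Require Import structures.
From mathcomp Require Import all_boot all_order all_algebra.
From mathcomp Require Import all_classical all_reals all_analysis.

Set Implicit Arguments.
Unset Strict Implicit.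
Unset Printing Implicit Defensive.

Import Order.TTheory GRing.Theory Num.Theory.
Local Open Scope ring_scope.

Section Valuations.
Context {R : realType} {k : nat}.

Definition monotone_val (v : {set 'I_k} -> R) : Prop :=
  forall S T : {set 'I_k}, S \subset T -> v S <= v T.

Definition normalized_val (v : {set 'I_k} -> R) : Prop := v finset.set0 = 0.

Definition XOS_val (v : {set 'I_k} -> R) : Prop :=
  exists (N : nat) (c : 'I_N -> 'I_k -> R),
    (forall t l, 0 <= c t l) /\
    forall S : {set 'I_k}, v S = \big[Num.max/0]_(t < N) \sum_(l in S) c t l.

Definition buyer_valuation (v : {set 'I_k} -> R) : Prop :=
  [/\ monotone_val v, normalized_val v & XOS_val v].

(* a v T l is the weight of item l in the fixed additive function
   a(v,T,.) ; thus a(v,T,S) = \sum_(l in S) a v T l. *)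
Definition supporting_additive
    (a : ({set 'I_k} -> R) -> {set 'I_k} -> 'I_k -> R) : Prop :=
  forall v, buyer_valuation v -> forall T : {set 'I_k},
    [/\ (forall l, 0 <= a v T l),
        \sum_(l in T) a v T l = v T &
        forall S : {set 'I_k}, \sum_(l in S) a v T l <= v S].

End Valuations.

Section Mechanism.
Context {R : realType} {n m k : nat}.
Context {dB : measure_display} {OmegaB : measurableType dB}
        (PB : probability OmegaB R)
        (V : OmegaB -> 'I_n -> {set 'I_k} -> R).
Context {dS : measure_display} {OmegaS : measurableType dS}
        (PS : probability OmegaS R)
        (* random seller values: W w l = w_j({l}) for the owner j of l *)
        (W : OmegaS -> 'I_k -> R).
Context (owner : 'I_k -> 'I_m)   (* l \in I_j  <->  owner l = j *)
        (XA : ('I_n -> {set 'I_k} -> R) -> 'I_n -> {set 'I_k})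
        (a : ({set 'I_k} -> R) -> {set 'I_k} -> 'I_k -> R)
        (* request rule: dem i v_i Lambda_i = B_i *)
        (dem : 'I_n -> ({set 'I_k} -> R) -> {set 'I_k} -> {set 'I_k}).

Definition seller_items (j : 'I_m) : {set 'I_k} := [set l | owner l == j].

Definition SWB (prof : 'I_n -> {set 'I_k} -> R) (l : 'I_k) : R :=
  \sum_(i < n) if l \in XA prof i then a (prof i) (XA prof i) l else 0.

Definition SWS (w : 'I_k -> R) (l : 'I_k) : R := w l.

Definition ESWB (l : 'I_k) : \bar R := (\int[PB]_x (SWB (V x) l)%:E)%E.
Definition ESWS (l : 'I_k) : \bar R := (\int[PS]_x (SWS (W x) l)%:E)%E.

Definition Lset : {set 'I_k} := [set l : 'I_k | (4%:E * ESWS l <= ESWB l)%E].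
Definition Lset_j (j : 'I_m) : {set 'I_k} := Lset :&: seller_items j.

Definition price (l : 'I_k) : R := fine (ESWB l) / 2.

(* Lambda_{t+1} (0-indexed: lam prof 0 = Lambda_1 = L) *)
Fixpoint lam (prof : 'I_n -> {set 'I_k} -> R) (t : nat) : {set 'I_k} :=
  match t with
  | 0 => Lset
  | t'.+1 =>
      let Lam := lam prof t' in
      Lam :\: (match (insub t' : option 'I_n) with
               | Some i => dem i (prof i) Lam
               | None => finset.set0 end)
  end.

Definition request (prof : 'I_n -> {set 'I_k} -> R) (i : 'I_n) : {set 'I_k} :=
  dem i (prof i) (lam prof i).

Definition unrequested (prof : 'I_n -> {set 'I_k} -> R) : {set 'I_k} := lam prof n.

Definition requested (prof : 'I_n -> {set 'I_k} -> R) : {set 'I_k} :=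
  \bigcup_(i < n) request prof i.

Definition seller_set (prof : 'I_n -> {set 'I_k} -> R) (j : 'I_m) : {set 'I_k} :=
  requested prof :&: Lset_j j.

Definition psum (S : {set 'I_k}) : R := \sum_(l in S) price l.

Definition wval (w : 'I_k -> R) (S : {set 'I_k}) : R := \sum_(l in S) w l.

Definition accept_prob (S : {set 'I_k}) : R :=
  fine (PS [set x | wval (W x) S <= psum S]%classic).

Definition offer_prob (S : {set 'I_k}) : R := (2 * accept_prob S)^-1.

(* Payment of buyer i for valuations (prof, w), in expectation over the
   mechanism's internal coins (seller j receives an offer w.p. q_j):
   on acceptance by seller j, buyer i pays p_l for each l in S_j :&: B_i. *)
Definition buyer_payment (prof : 'I_n -> {set 'I_k} -> R) (w : 'I_k -> R)
    (i : 'I_n) : R :=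
  \sum_(j < m)
     offer_prob (seller_set prof j) *
     (if wval w (seller_set prof j) <= psum (seller_set prof j)
      then \sum_(l in seller_set prof j :&: request prof i) price l
      else 0).

Definition total_buyer_payment (prof : 'I_n -> {set 'I_k} -> R)
    (w : 'I_k -> R) : R :=
  \sum_(i < n) buyer_payment prof w i.

Definition expected_buyer_payments : \bar R :=
  (\int[PB \x PS]_x (total_buyer_payment (V x.1) (W x.2))%:E)%E.

End Mechanism.

(* Main.v *)
Require Import Defs.
From HB Require Import structures.
From mathcomp Require Import all_boot all_order all_algebra.
From mathcomp Require Import all_classical all_reals all_analysis.
From mathcomp Require Import measurable_realfun.
From mathcomp Require Import lra ring.
Import Order.TTheory GRing.Theory Num.Theory.
Local Open Scope ring_scope.

Section Comb.
Context {R : realType} {n m k : nat}.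
Context {dB : measure_display} {OmegaB : measurableType dB}
        (PB : probability OmegaB R)
        (V : OmegaB -> 'I_n -> {set 'I_k} -> R).
Context {dS : measure_display} {OmegaS : measurableType dS}
        (PS : probability OmegaS R)
        (W : OmegaS -> 'I_k -> R).
Context (owner : 'I_k -> 'I_m)
        (XA : ('I_n -> {set 'I_k} -> R) -> 'I_n -> {set 'I_k})
        (a : ({set 'I_k} -> R) -> {set 'I_k} -> 'I_k -> R)
        (dem : 'I_n -> ({set 'I_k} -> R) -> {set 'I_k} -> {set 'I_k}).
Hypothesis hdem : forall i v (Lam : {set 'I_k}), dem i v Lam \subset Lam.

Local Notation lam := (lam PB V PS W XA a dem).
Local Notation Lset := (Lset PB V PS W XA a).
Local Notation request := (request PB V PS W XA a dem).

Definition Dt prof t : {set 'I_k} :=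
  if (insub t : option 'I_n) is Some i then dem i (prof i) (lam prof t) else finset.set0.

Lemma lamS prof t : lam prof t.+1 = lam prof t :\: Dt prof t.
Proof. by []. Qed.

Lemma Dt_sub prof t : Dt prof t \subset lam prof t.
Proof. rewrite /Dt; case: insub => [i|]; [exact: hdem | exact: finset.sub0set]. Qed.

Lemma lam_sub prof t : lam prof t \subset Lset.
Proof.
elim: t => [|t IH] //=; apply: (fintype.subset_trans _ IH); exact: subsetDl.
Qed.

Lemma request_Dt prof (i : 'I_n) : request prof i = Dt prof i.
Proof. by rewrite /request /Dt valK. Qed.

Lemma setE_step prof t (S : {set 'I_k}) :
  S :&: (Lset :\: lam prof t.+1) =
  (S :&: Dt prof t) :|: (S :&: (Lset :\: lam prof t)).
Proof.
have h1 := Dt_sub prof t; have h2 := lam_sub prof t.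
apply/setP => l; rewrite lamS !(finset.in_setI, finset.in_setD, finset.in_setU).
case: (boolP (l \in Dt prof t)) => hD.
  have hl := fintype.subsetP h1 _ hD; have hL := fintype.subsetP h2 _ hl.
  by rewrite hl hL /=; case: (l \in S).
by rewrite /=; case: (l \in S); case: (l \in lam prof t); case: (l \in Lset).
Qed.

Lemma disj_step prof t (S : {set 'I_k}) :
  [disjoint S :&: Dt prof t & S :&: (Lset :\: lam prof t)].
Proof.
have h1 := Dt_sub prof t.
rewrite -setI_eq0; apply/eqP/setP => l; rewrite finset.in_set0 !(finset.in_setI, finset.in_setD, finset.in_setU).
case: (boolP (l \in Dt prof t)) => hD; last by rewrite /= andbF.
by rewrite (fintype.subsetP h1 _ hD) /= !andbF.
Qed.

Lemma sum_lt prof (S : {set 'I_k}) (g : 'I_k -> R) t :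
  \sum_(0 <= u < t) \sum_(l in S :&: Dt prof u) g l =
  \sum_(l in S :&: (Lset :\: lam prof t)) g l.
Proof.
elim: t => [|t IH].
  rewrite big_nil finset.setDv finset.setI0 big_pred0 // => l; by rewrite inE.
rewrite big_nat_recr // IH setE_step.
rewrite [in RHS](eq_bigl [predU (S :&: Dt prof t) & (S :&: (Lset :\: lam prof t))]); last first.
  by move=> l; rewrite !inE.
rewrite bigU ?disj_step //; exact: addrC.
Qed.

Lemma bigcup_lt prof t :
  \bigcup_(0 <= u < t) Dt prof u = Lset :\: lam prof t.
Proof.
elim: t => [|t IH].
  by rewrite big_nil finset.setDv.
rewrite big_nat_recr // IH.
have := setE_step prof t [set: 'I_k]; rewrite !finset.setTI => ->.
by rewrite finset.setUC.
Qed.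

Lemma requested_eq prof : requested PB V PS W XA a dem prof = Lset :\: lam prof n.
Proof.
rewrite /requested -bigcup_lt big_mkord.
by apply: eq_bigr => i _; rewrite request_Dt.
Qed.

Lemma sum_requests prof (S : {set 'I_k}) (g : 'I_k -> R) :
  S \subset requested PB V PS W XA a dem prof ->
  \sum_(i < n) \sum_(l in S :&: request prof i) g l = \sum_(l in S) g l.
Proof.
move=> hS.
have -> : \sum_(i < n) \sum_(l in S :&: request prof i) g l =
          \sum_(0 <= u < n) \sum_(l in S :&: Dt prof u) g l.
  by rewrite big_mkord; apply: eq_bigr => i _; rewrite request_Dt.
rewrite sum_lt -requested_eq.
by move/finset.setIidPl: hS => ->.
Qed.


Local Notation psum := (psum PB V XA a).
Local Notation offer := (offer_prob PB V PS W XA a).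
Local Notation Lj := (Lset_j PB V PS W owner XA a).

Definition ST (T : {set 'I_k}) (j : 'I_m) : {set 'I_k} := (Lset :\: T) :&: Lj j.
Definition Gpay T (w : 'I_k -> R) := \sum_(j < m) offer (ST T j) *
  (if wval w (ST T j) <= psum (ST T j) then psum (ST T j) else 0).

Lemma total_eq prof w :
  total_buyer_payment PB V PS W owner XA a dem prof w = Gpay (lam prof n) w.
Proof.
rewrite /total_buyer_payment /buyer_payment exchange_big /Gpay.
apply: eq_bigr => j _.
have hS : seller_set PB V PS W owner XA a dem prof j = ST (lam prof n) j.
  by rewrite /seller_set requested_eq.
rewrite -mulr_sumr -hS; congr (_ * _).
case: ifP => _; last by rewrite big1.
rewrite sum_requests //; exact: finset.subsetIl.
Qed.

Lemma ST_sub T j : ST T j \subset Lset.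
Proof. apply: (fintype.subset_trans (finset.subsetIl _ _)); exact: finset.subsetDl. Qed.

Lemma partition_ST T :
  \sum_(j < m) psum (ST T j) = \sum_(l in Lset) (l \notin T)%:R * price PB V XA a l.
Proof.
rewrite /psum.
under eq_bigr => j _ do rewrite big_mkcond.
rewrite exchange_big [RHS]big_mkcond; apply: eq_bigr => l _.
have memST j : (l \in ST T j) = [&& l \in Lset, l \notin T & owner l == j].
  have hsi : (l \in seller_items owner j) = (owner l == j) by rewrite finset.in_set.
  rewrite /ST /Lset_j !(finset.in_setI, finset.in_setD) hsi.
  by case: (l \in Lset); case: (l \in T).
under eq_bigr => j _ do rewrite memST.
case: (l \in Lset); case: (l \in T) => /=; try by rewrite big1 // mul0r.
by rewrite mul1r -big_mkcond (big_pred1 (owner l)) // => j.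
Qed.

End Comb.

Lemma int_indic_sum d (T : measurableType d) (R : realType)
  (mu : {measure set T -> \bar R}) (I : Type) (s : seq I) (c : I -> R)
  (E : I -> set T) :
  (forall i, 0 <= c i) -> (forall i, measurable (E i)) ->
  (\int[mu]_x (\sum_(i <- s) c i * \1_(E i) x)%:E =
   \sum_(i <- s) (c i)%:E * mu (E i))%E.
Proof.
move=> c0 mE.
under eq_integral => x _ do rewrite -sumEFin.
rewrite ge0_integral_sum //; first last.
- by move=> i x _; rewrite lee_fin mulr_ge0.
- move=> i; apply/measurable_EFinP; apply: measurable_funM.
    exact: measurable_cst.
  exact: measurable_indic.
apply: eq_bigr => i _.
under eq_integral => x _ do rewrite EFinM.
rewrite ge0_integralZl_EFin //.
- by rewrite integral_indic // setIT.
- apply/measurable_EFinP; exact: measurable_indic.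
Qed.

Section Meas.
Context {R : realType} {n m k : nat}.
Context {dB : measure_display} {OmegaB : measurableType dB}
        (PB : probability OmegaB R)
        (V : OmegaB -> 'I_n -> {set 'I_k} -> R).
Context {dS : measure_display} {OmegaS : measurableType dS}
        (PS : probability OmegaS R)
        (W : OmegaS -> 'I_k -> R).
Context (owner : 'I_k -> 'I_m)
        (XA : ('I_n -> {set 'I_k} -> R) -> 'I_n -> {set 'I_k})
        (a : ({set 'I_k} -> R) -> {set 'I_k} -> 'I_k -> R)
        (dem : 'I_n -> ({set 'I_k} -> R) -> {set 'I_k} -> {set 'I_k}).
Hypothesis hW : forall x l, 0 <= W x l.
Hypothesis hintB : forall l, PB.-integrable setT (fun x => (SWB XA a (V x) l)%:E).
Hypothesis hintS : forall l, PS.-integrable setT (fun x => (W x l)%:E).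

Local Notation Lset := (Lset PB V PS W XA a).
Local Notation psum := (psum PB V XA a).
Local Notation price := (price PB V XA a).
Local Notation offer := (offer_prob PB V PS W XA a).
Local Notation acc := (accept_prob PB V PS W XA a).

Definition Bs (S : {set 'I_k}) := [set y | wval (W y) S <= psum S]%classic.

Lemma mW l : measurable_fun setT (fun y => W y l).
Proof. by have /integrableP[/measurable_EFinP ? _] := hintS l. Qed.

Lemma mwval S : measurable_fun setT (fun y => wval (W y) S).
Proof.
rewrite /wval; under eq_fun do rewrite -big_enum.
apply: measurable_sum => l; exact: mW.
Qed.

Lemma mBs S : measurable (Bs S).
Proof.
have := mwval S measurableT _ (measurable_itv `]-oo, psum S]).
rewrite setTI; congr measurable; apply/seteqP; split => y /=; rewrite in_itv /=; by [].
Qed.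

Lemma price_prop l : l \in Lset ->
  0 <= price l /\ (ESWS PS W l <= (price l / 2)%:E)%E.
Proof.
rewrite inE => hl.
have finB : ESWB PB V XA a l \is a fin_num.
  by apply: integrable_fin_num => //; exact: (hintB l).
have finS : ESWS PS W l \is a fin_num.
  by apply: integrable_fin_num => //; exact: (hintS l).
have S0 : (0 <= ESWS PS W l)%E.
  by apply: integral_ge0 => x _; have := hW x l; rewrite -lee_fin; exact.
rewrite -(fineK finB) -(fineK finS) lee_fin in hl.
rewrite -(fineK finS) lee_fin in S0.
rewrite -(fineK finS) lee_fin /price.
split; lra.
Qed.

Lemma psum_ge0 (S : {set 'I_k}) : S \subset Lset -> 0 <= psum S.
Proof.
move=> hS; rewrite /psum; apply: sumr_ge0 => l hl.
exact: (price_prop _ (fintype.subsetP hS _ hl)).1.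
Qed.

Lemma acc_ge0 (S : {set 'I_k}) : 0 <= acc S.
Proof. by rewrite /accept_prob fine_ge0 // measure_ge0. Qed.

Lemma offer_ge0 (S : {set 'I_k}) : 0 <= offer S.
Proof. by rewrite /offer_prob invr_ge0 mulr_ge0 // acc_ge0. Qed.

Lemma acc_pos (S : {set 'I_k}) : S \subset Lset -> 0 < psum S -> 0 < acc S.
Proof.
move=> hS hp.
pose C := (~` Bs S)%classic.
have mC : measurable C := measurableC (mBs S).
have hBs : Bs S = (~` C)%classic by rewrite setCK.
have finC : PS C \is a fin_num := fin_num_measure PS C mC.
have key : ((psum S)%:E * PS C <= (psum S / 2)%:E)%E.
  have e1 : ((psum S)%:E * PS C = \int[PS]_y ((psum S) * \1_C y)%:E)%E.
    rewrite (_ : ((psum S)%:E * PS C)%E = \sum_(i <- [:: tt]) ((psum S)%:E * PS C))%E; last by rewrite big_seq1.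
    rewrite -(@int_indic_sum _ _ _ PS _ [:: tt] (fun _ => psum S) (fun _ => C)) //.
    - by apply: eq_integral => y _; rewrite big_seq1.
    - by move=> _; exact: ltW.
  rewrite e1.
  apply: (@le_trans _ _ (\int[PS]_y (wval (W y) S)%:E)%E).
    apply: ge0_le_integral => //.
    - by move=> y _; rewrite lee_fin mulr_ge0 // ltW.
    - apply/measurable_EFinP; apply: measurable_funM.
        exact: measurable_cst.
      exact: measurable_indic.
    - apply/measurable_EFinP; exact: mwval.
    - move=> y _; rewrite lee_fin indicE.
      case: (boolP (y \in C)) => hy.
        rewrite mulr1; move: (set_mem hy); rewrite /C /Bs /= => /negP.
        by rewrite -ltNge => /ltW.
      by rewrite mulr0 /wval sumr_ge0 // => l _; exact: hW.
  rewrite /wval.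
  under eq_integral => y _ do rewrite -big_enum -sumEFin.
  rewrite ge0_integral_sum //; first last.
  - by move=> l y _; rewrite lee_fin; exact: hW.
  - by move=> l; apply/measurable_EFinP; exact: mW.
  rewrite big_enum /= /psum mulr_suml -sumEFin; apply: lee_sum => l hl.
  exact: (price_prop _ (fintype.subsetP hS _ hl)).2.
rewrite -(fineK finC) -EFinM lee_fin in key.
have pC0 : 0 <= fine (PS C) by rewrite fine_ge0 // measure_ge0.
have hle : fine (PS C) <= 2^-1.
  rewrite -(ler_pM2l hp); nra.
rewrite /accept_prob -/(Bs S) hBs probability_setC // -(fineK finC) /=.
lra.
Qed.

Lemma offer_key (S : {set 'I_k}) : S \subset Lset -> offer S * psum S * acc S = psum S / 2.
Proof.
move=> hS; have := psum_ge0 _ hS; rewrite le_eqVlt => /orP[/eqP <-|hp].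
  by rewrite mulr0 mul0r mul0r.
have ha := acc_pos _ hS hp.
rewrite /offer_prob; field; lra.
Qed.
End Meas.

Theorem lemma4 (R : realType) (n m k : nat)
  (dB : measure_display) (OmegaB : measurableType dB) (PB : probability OmegaB R)
  (V : OmegaB -> 'I_n -> {set 'I_k} -> R)
  (dS : measure_display) (OmegaS : measurableType dS) (PS : probability OmegaS R)
  (W : OmegaS -> 'I_k -> R)
  (owner : 'I_k -> 'I_m)
  (XA : ('I_n -> {set 'I_k} -> R) -> 'I_n -> {set 'I_k})
  (a : ({set 'I_k} -> R) -> {set 'I_k} -> 'I_k -> R)
  (dem : 'I_n -> ({set 'I_k} -> R) -> {set 'I_k} -> {set 'I_k}) :
  (* buyer valuations are monotone normalized XOS *)
  (forall x i, buyer_valuation (V x i)) ->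
  (* a(v,T,.) : additive, a(v,T,T) = v(T), a(v,T,S) <= v(S) *)
  supporting_additive a ->
  (* the allocation A assigns disjoint bundles *)
  (forall prof (i i' : 'I_n), i != i' -> [disjoint XA prof i & XA prof i']) ->
  (* each buyer requests a bundle among the remaining items *)
  (forall i v (Lam : {set 'I_k}), dem i v Lam \subset Lam) ->
  (* seller valuations are non-negative additive *)
  (forall x l, 0 <= W x l) ->
  (* regularity: the expectations exist and the events are measurable *)
  (forall l, PB.-integrable setT (fun x => (SWB XA a (V x) l)%:E)) ->
  (forall l, PS.-integrable setT (fun x => (W x l)%:E)) ->
  (forall (t : nat) (S : {set 'I_k}),
      measurable [set x | lam PB V PS W XA a dem (V x) t = S]%classic) ->
  expected_buyer_payments PB V PS W owner XA a dem =
  ((2^-1)%:E *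
   \sum_(l in Lset PB V PS W XA a)
      PB [set x | l \notin unrequested PB V PS W XA a dem (V x)]%classic
      * (price PB V XA a l)%:E)%E.
Proof.
move=> _ _ _ hdem hW hintB hintS hmeas.
pose A (T : {set 'I_k}) := [set x | lam PB V PS W XA a dem (V x) n = T]%classic.
have mA T : measurable (A T) := hmeas n T.
pose S T j := ST PB V PS W owner XA a T j.
pose c T j := offer_prob PB V PS W XA a (S T j) * psum PB V XA a (S T j).
pose B T j := Bs PB V W XA a (S T j).
have psum0 := @psum_ge0 R n k dB OmegaB PB V dS OmegaS PS W XA a hW hintB hintS.
have okey := @offer_key R n k dB OmegaB PB V dS OmegaS PS W XA a hW hintB hintS.
have mB T j : measurable (B T j) := @mBs R n k dB OmegaB PB V dS OmegaS PS W XA a hintS _.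
have STs T j : S T j \subset Lset PB V PS W XA a := ST_sub PB V PS W owner XA a T j.
have c0 T j : 0 <= c T j.
  by rewrite mulr_ge0 ?offer_ge0 // psum0.
have pt (x : OmegaB * OmegaS) :
    total_buyer_payment PB V PS W owner XA a dem (V x.1) (W x.2) =
    \sum_T \sum_j c T j * \1_(A T `*` B T j)%classic x.
  rewrite total_eq // /Gpay.
  set T0 := lam PB V PS W XA a dem (V x.1) n.
  symmetry.
  rewrite (eq_bigr (fun T => if T == T0 then \sum_j c T j * \1_(A T `*` B T j)%classic x else 0)); last first.
    move=> T _; case: eqP => [//|hT]; apply: big1 => j _.
    rewrite indicE memNset ?mulr0 // => -[hA _]; exact: hT.
  rewrite -big_mkcond big_pred1_eq; apply: eq_bigr => j _.
  rewrite indicE /c /B /S.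
  case: (boolP (x \in _)) => hx.
    have [_ hB] := set_mem hx.
    by rewrite /Bs /= in hB; rewrite hB mulr1.
  case: ifP => hw; last by rewrite !mulr0.
  exfalso; move/negP: hx; apply; apply: mem_set; split => //.
have eA T : PB (A T) = (fine (PB (A T)))%:E by rewrite fineK // fin_num_measure.
have eB T j : PS (B T j) = (accept_prob PB V PS W XA a (S T j))%:E.
  by rewrite /accept_prob fineK //; apply: fin_num_measure; exact: mB.
have LHSeq : expected_buyer_payments PB V PS W owner XA a dem =
   (\sum_T \sum_j c T j * (fine (PB (A T)) * accept_prob PB V PS W XA a (S T j)))%:E.
  rewrite /expected_buyer_payments.
  under eq_integral => x _ do rewrite pt pair_big /=.
  rewrite int_indic_sum; first last.
  - by move=> p; exact: measurableX.
  - by move=> p; exact: c0.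
  rewrite [in RHS]pair_big -sumEFin /=; apply: eq_bigr => p _.
  rewrite product_measure1E //.
  transitivity ((c p.1 p.2)%:E * ((fine (PB (A p.1)))%:E *
     (accept_prob PB V PS W XA a (S p.1 p.2))%:E))%E; last by rewrite -!EFinM.
  by congr (_ * (_ * _))%E; [exact: eA | exact: eB].
have eE l : PB [set x | l \notin unrequested PB V PS W XA a dem (V x)]%classic =
    (\sum_(T : {set 'I_k}) (l \notin T)%:R * fine (PB (A T)))%:E.
  pose E := [set x | l \notin unrequested PB V PS W XA a dem (V x)]%classic.
  have hind x : \1_E x = \sum_(T : {set 'I_k}) (l \notin T)%:R * \1_(A T) x :> R.
    rewrite (eq_bigr (fun T => if T == lam PB V PS W XA a dem (V x) n
        then (l \notin T)%:R * \1_(A T) x else 0)); last first.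
      move=> T _; case: eqP => [//|hT]; rewrite indicE memNset ?mulr0 //.
      by move=> h; apply: hT; rewrite -h.
    rewrite -big_mkcond big_pred1_eq !indicE (mem_set (_ : A _ x)) // mulr1.
    suff -> : (x \in E) = (l \notin lam PB V PS W XA a dem (V x) n) by [].
    case: (boolP (l \notin lam PB V PS W XA a dem (V x) n)) => h.
      exact: mem_set.
    by apply/negP => /set_mem hE; move/negP: h; apply; exact: hE.
  have mE : measurable E.
    apply/measurable_indicP.
    rewrite (_ : \1_E = fun x => \sum_(T : {set 'I_k}) (l \notin T)%:R * \1_(A T) x); last first.
      by apply/funext => x; exact: hind.
    apply: measurable_sum => T; apply: measurable_funM.
      exact: measurable_cst.
    exact: measurable_indic.
  transitivity (\int[PB]_x (\1_E x)%:E)%E.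
    by rewrite integral_indic // setIT.
  under eq_integral => x _ do rewrite hind.
  rewrite int_indic_sum //.
  rewrite -sumEFin; apply: eq_bigr => T _.
  transitivity (((l \notin T)%:R)%:E * (fine (PB (A T)))%:E)%E; last by rewrite -EFinM.
  by congr (_ * _)%E; exact: eA.
rewrite LHSeq.
transitivity ((2^-1)%:E * \sum_(l in Lset PB V PS W XA a)
   ((\sum_(T : {set 'I_k}) (l \notin T)%:R * fine (PB (A T)))%:E * (price PB V XA a l)%:E))%E; last first.
  congr (_ * _)%E; apply: eq_bigr => l _; congr (_ * _)%E; exact: (esym (eE l)).
symmetry.
under eq_bigr => l _ do rewrite -EFinM.
rewrite sumEFin -EFinM; congr (_%:E); symmetry.
have L1 T : \sum_j c T j * (fine (PB (A T)) * accept_prob PB V PS W XA a (S T j)) =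
    fine (PB (A T)) * (2^-1 * \sum_(l in Lset PB V PS W XA a)
       (l \notin T)%:R * price PB V XA a l).
  rewrite -(partition_ST PB V PS W owner XA a T) !mulr_sumr; apply: eq_bigr => j _.
  have h := okey _ (STs T j).
  rewrite /c /S in h *.
  transitivity (fine (PB (A T)) * (offer_prob PB V PS W XA a (ST PB V PS W owner XA a T j) *
     psum PB V XA a (ST PB V PS W owner XA a T j) *
     accept_prob PB V PS W XA a (ST PB V PS W owner XA a T j))); first by ring.
  by rewrite h; ring.
under eq_bigr => T _ do rewrite L1.
rewrite mulr_sumr.
under [RHS]eq_bigr => l _ do rewrite mulr_suml mulr_sumr.
rewrite [RHS]exchange_big; apply: eq_bigr => T _.
rewrite !mulr_sumr; apply: eq_bigr => l _; ring.
Qed.
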